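(* Assume that spacetime is Minkowski in $1+n$ dimensions and that the Nontrivial Poincaré Invariance postulate and the Existence of Classical Momentum postulate (both stated in the context) hold for particles of the type $\mathcal{P}$, which have mass $m>0$. Let $p_{\text{rest}}=(m,0,\ldots,0)^{\text{t}}$ and consider, for any internal degrees of freedom of such a particle with finite-dimensional state space $\mathcal{S}\subset\mathbb{R}^{d+1}$, the maps $R^{\text{st}}_{p_{\text{rest}}}(P(x,\Lambda)):\mathcal{S}\to\mathcal{S}$ describing how the internal state $\zeta$ of the classical-momentum state $Z^{\text{class}}_{p_{\text{rest}},\zeta}$ transforms under $P(x,\Lambda)\in\mathfrak{Poin}$, i.e. $Z^{\text{class}}_{p_{\text{rest}},\zeta}\mapsto Z^{\text{class}}_{\Lambda p_{\text{rest}},\,R^{\text{st}}_{p_{\text{rest}}}(P(x,\Lambda))\zeta}$. Then $R^{\text{st}}_{p_{\text{rest}}}$ restricted to spatial rotations is a representation of $\mathrm{SO}(n)$: $$R^{\text{st}}_{p_{\text{rest}}}(P(\vec{0},O_2))\,R^{\text{st}}_{p_{\text{rest}}}(P(\vec{0},O_1))=R^{\text{st}}_{p_{\text{rest}}}(P(\vec{0},O_2O_1))$$ for all $O_i=\begin{pmatrix}1&0\\0&\tilde O_i\end{pmatrix}$ with $\tilde O_i\in\mathrm{SO}(n)$, $i\in\{1,2\}$.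
   Context: Minkowski spacetime in $1+n$ dimensions has metric $\eta=\mathrm{diag}(-1,1,\ldots,1)$ (units with $c=1$). A Poincaré transformation $P(a,\Lambda)$ acts by $x\mapsto \Lambda x+a$ with $a\in\mathbb{R}^{1+n}$ and $\Lambda^{\text{t}}\eta\Lambda=\eta$; they compose as $P(a',\Lambda')\circ P(a,\Lambda)=P(a'+\Lambda'a,\Lambda'\Lambda)$. $\mathfrak{L}$ denotes the proper orthochronous Lorentz group (Lorentz transformations continuously connected to the identity: rotations and boosts) and $\mathfrak{Poin}=\{P(a,\Lambda):\Lambda\in\mathfrak{L}\}$. General probabilistic theories (GPTs): a finite-dimensional system of dimension $d$ has a closed convex state space $\mathcal{S}=\{(1,\tilde\zeta)^{\text{t}}:\tilde\zeta\in\tilde{\mathcal{S}}\}\subset\mathbb{R}^{d+1}$, a convex set of effects $\mathcal{E}\subseteq\{\varepsilon\in\mathbb{R}^{d+1}:0\le\varepsilon\cdot\zeta\le1\ \forall\zeta\in\mathcal{S}\}$ containing the unit effect $u=(1,0,\ldots,0)^{\text{t}}$ and the zero effect, with outcome probability $\varepsilon(\zeta)=\varepsilon\cdot\zeta$, and a set of allowed linear transformations $\mathcal{S}\to\mathcal{S}$. A continuous-dimensional GPT has sets $\mathscr{S}$ (states), $\mathscr{E}$ (effects, maps $\mathscr{S}\to[0,1]$), $\mathscr{T}$ (maps $\mathscr{S}\to\mathscr{S}$). A GPT is invariant under a group $\mathfrak{G}$ of changes of reference frame if there are representations $\hat{\mathbf{R}}^{\text{st}},\hat{\mathbf{R}}^{\text{ef}}$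 of $\mathfrak{G}$ (identity to identity, $\hat{\mathbf{R}}(G_2)\circ\hat{\mathbf{R}}(G_1)=\hat{\mathbf{R}}(G_2\circ G_1)$) on $\mathscr{S}$ and $\mathscr{E}$ such that under $G\in\mathfrak{G}$ states and effects transform as $Z\mapsto\hat{\mathbf{R}}^{\text{st}}(G)[Z]$, $\hat E\mapsto\hat{\mathbf{R}}^{\text{ef}}(G)[\hat E]$, and outcome probabilities are invariant: $\hat E'[Z']=\hat E[Z]$. It is nontrivially invariant if these representations are not trivial. Particles of the type $\mathcal{P}$: massive particles of mass $m>0$, each described by the same GPT with state/effect/transformation sets $\mathscr{S},\mathscr{E},\mathscr{T}$ (including spacetime degrees of freedom such as momentum), whose internal degrees of freedom are described by a finite-dimensional GPT $(\mathcal{S},\mathcal{E},\mathcal{T})$ of dimension $d$. Nontrivial Poincaré Invariance: the GPT of a particle of type $\mathcal{P}$ is nontrivially invariant under $\mathfrak{Poin}$. Existence of Classical Momentum: with $p_{\text{rest}}=(m,0,\ldots,0)^{\text{t}}$ and $\Pi_{p_{\text{rest}}}=\{\Lambda p_{\text{rest}}:\Lambda\in\mathfrak{L}\}$, there are states $Z^{\text{class}}_{p,\zeta}\in\mathscr{S}$ and effects $\hat E^{\text{class}}_{p,\varepsilon}\in\mathscr{E}$ for all $p\in\Pi_{p_{\text{rest}}}$, $\zeta\in\mathcal{S}$, $\varepsilon\in\mathcal{E}$, with $\hat E^{\text{class}}_{p',\varepsilon}[Z^{\text{class}}_{p,\zeta}]=\delta(p'-p)\,\varepsilon\cdot\zeta$,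 and under $P(x,\Lambda)\in\mathfrak{Poin}$: $\hat{\mathbf{R}}^{\text{st}}(P(x,\Lambda))[Z^{\text{class}}_{p,\zeta}]=Z^{\text{class}}_{\Lambda p,\,R^{\text{st}}_p(P(x,\Lambda))\zeta}$ and $\hat{\mathbf{R}}^{\text{ef}}(P(x,\Lambda))[\hat E^{\text{class}}_{p,\varepsilon}]=\hat E^{\text{class}}_{\Lambda p,\,R^{\text{ef}}_p(P(x,\Lambda))\varepsilon}$ for some maps $R^{\text{st}}_p(P(x,\Lambda)):\mathcal{S}\to\mathcal{S}$, $R^{\text{ef}}_p(P(x,\Lambda)):\mathcal{E}\to\mathcal{E}$. *)

(* Defs.v *)
From HB Require Import structures.
From mathcomp Require Import all_boot all_order all_algebra.
From mathcomp Require Import all_classical all_reals all_analysis.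
Unset Printing Implicit Defensive.
Import Order.TTheory GRing.Theory Num.Theory.
Import numFieldNormedType.Exports.
Local Open Scope classical_set_scope.
Local Open Scope ring_scope.

Definition eta {R : realType} (n : nat) : 'M[R]_(n.+1) :=
  \matrix_(i, j) (if i == j then (if i == ord0 then -1 else 1) else 0).

Definition lorentz {R : realType} (n : nat) : set 'M[R]_(n.+1) :=
  [set L | L^T *m eta n *m L = eta n].

(* proper orthochronous Lorentz group: Lorentz transformations continuously
   connected to the identity (connected component of 1 in the Lorentz group) *)
Definition lorentz_po {R : realType} (n : nat) : set 'M[R]_(n.+1) :=
  connected_component (lorentz n) 1%:M.

(* Poincare transformations P(a, L) : x |-> L x + a *)
Definition poin (R : realType) (n : nat) : Type :=
  ('cV[R]_(n.+1) * 'M[R]_(n.+1))%type.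

Definition P {R : realType} {n : nat} (a : 'cV[R]_(n.+1)) (L : 'M[R]_(n.+1))
  : poin R n := (a, L).

Definition pcomp {R : realType} {n : nat} (G2 G1 : poin R n) : poin R n :=
  (G2.1 + G2.2 *m G1.1, G2.2 *m G1.2).

Definition pid {R : realType} {n : nat} : poin R n := (0, 1%:M).

Definition Poin {R : realType} (n : nat) : set (poin R n) :=
  [set G | lorentz_po n G.2].

Definition is_rep_on {R : realType} {n : nat} {T : Type} (X : set T)
  (Rp : poin R n -> T -> T) : Prop :=
  [/\ (forall G x, Poin n G -> X x -> X (Rp G x)),
      (forall x, X x -> Rp pid x = x) &
      (forall G2 G1 x, Poin n G1 -> Poin n G2 -> X x ->
          Rp (pcomp G2 G1) x = Rp G2 (Rp G1 x))].

Definition vdot {R : realType} {d : nat} (e z : 'cV[R]_(d.+1)) : R :=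
  (e^T *m z) ord0 ord0.

Definition convex_vset {R : realType} {d : nat} (A : set 'cV[R]_(d.+1)) :=
  forall x y (t : R), A x -> A y -> 0 <= t -> t <= 1 ->
    A (t *: x + (1 - t) *: y).

Definition unit_effect {R : realType} (d : nat) : 'cV[R]_(d.+1) :=
  \col_i (if i == ord0 then 1 else 0).

(* S : state space (vectors (1, zeta~)), E : effects, T : transformations *)
Definition fin_GPT {R : realType} (d : nat) (S E : set 'cV[R]_(d.+1))
  (T : set 'M[R]_(d.+1)) : Prop :=
  [/\ [/\ closed S, convex_vset S & (forall z, S z -> z ord0 ord0 = 1)],
      [/\ convex_vset E, E (unit_effect d) & E 0],
      (forall e z, E e -> S z -> 0 <= vdot e z <= 1),
      (* standard (reduced) GPT convention: effects separate states *)
      (forall z1 z2, S z1 -> S z2 ->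
         (forall e, E e -> vdot e z1 = vdot e z2) -> z1 = z2) &
      (forall M z, T M -> S z -> S (M *m z))].

(* The continuous GPT of the particle: states Ss in type St, effects Es
   (maps St -> R), transformations Ts.  Nontrivial Poincare invariance: *)
Definition nontriv_poincare_invariant {R : realType} (n : nat) {St : Type}
  (Ss : set St) (Es : set (St -> R))
  (Rst : poin R n -> St -> St) (Ref : poin R n -> (St -> R) -> (St -> R)) :=
  [/\ is_rep_on Ss Rst, is_rep_on Es Ref,
      (forall G Z E, Poin n G -> Ss Z -> Es E -> Ref G E (Rst G Z) = E Z),
      (exists G Z, Poin n G /\ Ss Z /\ Rst G Z <> Z) &
      (exists G E, Poin n G /\ Es E /\ Ref G E <> E)].

Definition p_rest {R : realType} (n : nat) (m : R) : 'cV[R]_(n.+1) :=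
  \col_i (if i == ord0 then m else 0).

Definition mass_shell {R : realType} (n : nat) (m : R) : set 'cV[R]_(n.+1) :=
  [set p | exists L, lorentz_po n L /\ p = L *m p_rest n m].

(* Existence of classical momentum.  [delta] stands for the Dirac delta:
   it vanishes off 0 and is nonzero at 0. *)
Definition classical_momentum {R : realType} (n d : nat) (m : R) {St : Type}
  (Ss : set St) (Es : set (St -> R))
  (Rst : poin R n -> St -> St) (Ref : poin R n -> (St -> R) -> (St -> R))
  (S E : set 'cV[R]_(d.+1)) (delta : 'cV[R]_(n.+1) -> R)
  (Zc : 'cV[R]_(n.+1) -> 'cV[R]_(d.+1) -> St)
  (Ec : 'cV[R]_(n.+1) -> 'cV[R]_(d.+1) -> (St -> R))
  (Rstp Refp : 'cV[R]_(n.+1) -> poin R n -> 'cV[R]_(d.+1) -> 'cV[R]_(d.+1)) :=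
  [/\ (forall p z, mass_shell n m p -> S z -> Ss (Zc p z)),
      (forall p e, mass_shell n m p -> E e -> Es (Ec p e)),
      (forall p p' z e, mass_shell n m p -> mass_shell n m p' -> S z -> E e ->
          Ec p' e (Zc p z) = delta (p' - p) * vdot e z),
      (forall p G z, mass_shell n m p -> Poin n G -> S z ->
          S (Rstp p G z) /\ Rst G (Zc p z) = Zc (G.2 *m p) (Rstp p G z)) &
      (forall p G e, mass_shell n m p -> Poin n G -> E e ->
          E (Refp p G e) /\ Ref G (Ec p e) = Ec (G.2 *m p) (Refp p G e))].

Definition SO {R : realType} (n : nat) : set 'M[R]_n :=
  [set O | O^T *m O = 1%:M /\ \det O = 1].

Definition spatial_rot {R : realType} {n : nat} (Ot : 'M[R]_n) : 'M[R]_(n.+1) :=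
  block_mx (1%:M : 'M[R]_1) 0 0 Ot.

(* Main.v *)
Require Import Defs.
From HB Require Import structures.
From mathcomp Require Import all_boot all_order all_algebra.
From mathcomp Require Import all_classical all_reals all_analysis.
From mathcomp Require Import perm ring lra.
Import Order.TTheory GRing.Theory Num.Theory.
Import numFieldNormedType.Exports.
Local Open Scope classical_set_scope.
Local Open Scope ring_scope.

Section Cont.
Variable R : realType.

Lemma mx_cont_entries (T : topologicalType) m n (f : T -> 'M[R]_(m, n)) t :
  (forall i j, {for t, continuous (fun s => f s i j)}) -> {for t, continuous f}.
Proof.
move=> hf A /nbhs_ballP [e /= e0 eA].
have H : \forall s \near t, forall ij : 'I_m * 'I_n,
    ball (f t ij.1 ij.2) e (f s ij.1 ij.2).
  apply: filter_forall => ij.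
  exact: (hf ij.1 ij.2 _ (nbhsx_ballx _ _ e0)).
apply: filterS H => s Hs; apply: eA; split => // i j; exact: (Hs (i, j)).
Qed.

Lemma cont_entry m n (i : 'I_m) (j : 'I_n) :
  continuous (fun X : 'M[R]_(m, n) => X i j).
Proof.
move=> X A /nbhs_ballP [e /= e0 eA].
apply/nbhs_ballP; exists e => //= Y [_ XY]; apply: eA; exact: XY.
Qed.

Lemma cont_sum (T : topologicalType) (I : Type) (r : seq I) (F : I -> T -> R) t :
  (forall l, {for t, continuous (F l)}) ->
  {for t, continuous (fun s => \sum_(l <- r) F l s)}.
Proof.
move=> hF; elim: r => [|x r IH].
  rewrite (_ : (fun s => _) = (fun _ => 0)); last by apply/funext => s; rewrite big_nil.
  exact: cvg_cst.
rewrite (_ : (fun s => _) = (F x + (fun s => \sum_(l <- r) F l s))); last first.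
  by apply/funext => s; rewrite big_cons.
exact: (cvgD (hF x) IH).
Qed.

Lemma cont_prod (T : topologicalType) (I : Type) (r : seq I) (F : I -> T -> R) t :
  (forall l, {for t, continuous (F l)}) ->
  {for t, continuous (fun s => \prod_(l <- r) F l s)}.
Proof.
move=> hF; elim: r => [|x r IH].
  rewrite (_ : (fun s => _) = (fun _ => 1)); last by apply/funext => s; rewrite big_nil.
  exact: cvg_cst.
rewrite (_ : (fun s => _) = (F x \* (fun s => \prod_(l <- r) F l s))); last first.
  by apply/funext => s; rewrite big_cons.
exact: (cvgM (hF x) IH).
Qed.

Lemma cont_add (T : topologicalType) (f g : T -> R) t :
  {for t, continuous f} -> {for t, continuous g} -> {for t, continuous (fun s => f s + g s)}.
Proof. move=> hf hg; exact: (cvgD hf hg). Qed.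

Lemma cont_mul (T : topologicalType) (f g : T -> R) t :
  {for t, continuous f} -> {for t, continuous g} -> {for t, continuous (fun s => f s * g s)}.
Proof. move=> hf hg; exact: (cvgM hf hg). Qed.

Lemma cont_opp (T : topologicalType) (f : T -> R) t :
  {for t, continuous f} -> {for t, continuous (fun s => - f s)}.
Proof. move=> hf; exact: (cvgN hf). Qed.

Lemma cont_inv (T : topologicalType) (f : T -> R) t : f t != 0 ->
  {for t, continuous f} -> {for t, continuous (fun s => (f s)^-1)}.
Proof. move=> h0 hf; exact: (cvgV h0 hf). Qed.

Lemma cont_cst (T : topologicalType) (c : R) t : {for t, continuous (fun _ : T => c)}.
Proof. exact: cvg_cst. Qed.

Lemma cont_id t : {for t, continuous (fun s : R => s)}.
Proof. exact: cvg_id. Qed.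

Definition EC (T : topologicalType) m n (f : T -> 'M[R]_(m, n)) t :=
  forall i j, {for t, continuous (fun s => f s i j)}.
Arguments EC {T m n}.

Lemma EC_cst (T : topologicalType) m n (C : 'M[R]_(m, n)) t : EC (fun _ : T => C) t.
Proof. move=> i j; exact: cont_cst. Qed.

Lemma EC_add (T : topologicalType) m n (f g : T -> 'M[R]_(m, n)) t :
  EC f t -> EC g t -> EC (fun s => f s + g s) t.
Proof.
move=> hf hg i j.
rewrite (_ : (fun s => _) = (fun s => f s i j + g s i j)); last first.
  by apply/funext => s; rewrite mxE.
exact: cont_add.
Qed.

Lemma EC_opp (T : topologicalType) m n (f : T -> 'M[R]_(m, n)) t :
  EC f t -> EC (fun s => - f s) t.
Proof.
move=> hf i j.
rewrite (_ : (fun s => _) = (fun s => - f s i j)); last first.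
  by apply/funext => s; rewrite mxE.
exact: cont_opp.
Qed.

Lemma EC_scale (T : topologicalType) m n (c : T -> R) (f : T -> 'M[R]_(m, n)) t :
  {for t, continuous c} -> EC f t -> EC (fun s => c s *: f s) t.
Proof.
move=> hc hf i j.
rewrite (_ : (fun s => _) = (fun s => c s * f s i j)); last first.
  by apply/funext => s; rewrite mxE.
exact: cont_mul.
Qed.

Lemma EC_mul (T : topologicalType) m n p (f : T -> 'M[R]_(m, n)) (g : T -> 'M[R]_(n, p)) t :
  EC f t -> EC g t -> EC (fun s => f s *m g s) t.
Proof.
move=> hf hg i j.
rewrite (_ : (fun s => _) = (fun s => \sum_(l <- index_enum 'I_n) f s i l * g s l j)); last first.
  by apply/funext => s; rewrite mxE.
apply: cont_sum => l; exact: cont_mul.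
Qed.

Lemma EC_tr (T : topologicalType) m n (f : T -> 'M[R]_(m, n)) t :
  EC f t -> EC (fun s => (f s)^T) t.
Proof.
move=> hf i j.
rewrite (_ : (fun s => _) = (fun s => f s j i)); last first.
  by apply/funext => s; rewrite mxE.
exact: hf.
Qed.

Lemma EC_id m n (X : 'M[R]_(m, n)) : EC (fun Y => Y) X.
Proof. move=> i j; exact: cont_entry. Qed.

Arguments EC_add {T m n f g t}.
Arguments EC_opp {T m n f t}.
Arguments EC_scale {T m n c f t}.
Arguments EC_mul {T m n p f g t}.
Arguments EC_tr {T m n f t}.
Arguments cont_add {T f g t}.
Arguments cont_mul {T f g t}.
Arguments cont_opp {T f t}.
Arguments cont_inv {T f t}.

Lemma det_cont n (X : 'M[R]_n) : {for X, continuous (fun Y : 'M[R]_n => \det Y)}.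
Proof.
rewrite (_ : (fun Y => _) = (fun Y : 'M[R]_n => \sum_(s in {perm 'I_n})
   ((-1) ^+ perm.odd_perm s * \prod_i Y i (s i)))); last first.
  by apply/funext => Y.
apply: cont_sum => s; apply: cont_mul; first exact: cont_cst.
apply: cont_prod => i; exact: cont_entry.
Qed.

Lemma cc_image (T U : topologicalType) (A : set T) (B : set U) (f : T -> U) x y z :
  {in connected_component A x, continuous f} -> (forall w, A w -> B (f w)) ->
  connected_component B y (f x) -> connected_component A x z ->
  connected_component B y (f z).
Proof.
move=> fc AB Bfx Axz.
have Ax : A x.
  by apply: contrapT => nAx; move: Axz; rewrite connected_component_out.
have S1 : connected (f @` connected_component A x).
  apply: connected_continuous_connected; first exact: component_connected.
  exact: continuous_in_subspaceT.
have S2 : f @` connected_component A x `<=` connected_component B (f x).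
  apply: connected_component_max => //.
  - by exists x => //; exact: connected_component_refl.
  - by move=> _ [w Sw <-]; apply: AB; exact: (connected_component_sub Sw).
rewrite (same_connected_component Bfx).
by apply: S2; exists z.
Qed.

Definition orth (k : nat) : set 'M[R]_k := [set O | O^T *m O = 1%:M].
Definition Conn (k : nat) : set 'M[R]_k := connected_component (@orth k) 1%:M.
Arguments orth {k}.
Arguments Conn {k}.

Lemma orth1 {k} : orth (1%:M : 'M[R]_k).
Proof. by rewrite /orth /= trmx1 mul1mx. Qed.

Lemma orth_mul {k} (A B : 'M[R]_k) : orth A -> orth B -> orth (A *m B).
Proof.
rewrite /orth /= => hA hB.
by rewrite trmx_mul mulmxA -(mulmxA B^T) hA mulmx1 hB.
Qed.

Lemma orth_tr {k} (A : 'M[R]_k) : orth A -> orth A^T.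
Proof. by rewrite /orth /= trmxK => /mulmx1C. Qed.

Lemma orth_det {k} (A : 'M[R]_k) : orth A -> \det A * \det A = 1.
Proof. by rewrite /orth /= => /(congr1 determinant); rewrite det_mulmx det_tr det1. Qed.

Lemma Conn1 {k} : Conn (1%:M : 'M[R]_k).
Proof. exact/connected_component_refl/orth1. Qed.

Lemma Conn_orth {k} (A : 'M[R]_k) : Conn A -> orth A.
Proof. exact: connected_component_sub. Qed.

Lemma Conn_mul {k} (A B : 'M[R]_k) : Conn A -> Conn B -> Conn (A *m B).
Proof.
move=> hA hB.
apply: (@cc_image _ _ orth orth (fun X => X *m B) 1%:M 1%:M A) => //.
- move=> X _; apply: mx_cont_entries; apply: EC_mul; [exact: EC_id | exact: EC_cst].
- by move=> W hW; apply: orth_mul => //; exact: Conn_orth.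
- by rewrite mul1mx.
Qed.

Lemma Conn_tr {k} (A : 'M[R]_k) : Conn A -> Conn A^T.
Proof.
move=> hA.
apply: (@cc_image _ _ orth orth (fun X => X^T) 1%:M 1%:M A) => //.
- move=> X _; apply: mx_cont_entries; apply: EC_tr; exact: EC_id.
- by move=> W hW; apply: orth_tr.
- by rewrite trmx1; exact: Conn1.
Qed.

Lemma Conn_det {k} (A : 'M[R]_k) : Conn A -> \det A = 1.
Proof.
move=> hA.
have hc : connected ((fun X : 'M[R]_k => \det X) @` @Conn k).
  apply: connected_continuous_connected; first exact: component_connected.
  apply: continuous_subspaceT => X; exact: det_cont.
move/connected_intervalP: hc => hI.
have h1 : ((fun X : 'M[R]_k => \det X) @` @Conn k) 1.
  by exists 1%:M; [exact: Conn1 | exact: det1].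
have hA' : ((fun X : 'M[R]_k => \det X) @` @Conn k) (\det A) by exists A.
have hd := orth_det _ (Conn_orth _ hA).
have [->//|hne] := eqVneq (\det A) 1.
have hm1 : \det A = -1.
  have : (\det A - 1) * (\det A + 1) = 0 by rewrite mulrDr mulrBl hd; ring.
  move/eqP; rewrite mulf_eq0 subr_eq0 (negbTE hne) /= addr_eq0 => /eqP //.
have [X hX hX0] : ((fun X : 'M[R]_k => \det X) @` @Conn k) 0.
  apply: (hI (\det A) 1) => //; rewrite hm1; apply/andP; split; lra.
have := orth_det _ (Conn_orth _ hX); rewrite hX0 mul0r => /eqP; rewrite eq_sym oner_eq0 //.
Qed.


Definition blk {k} (X : 'M[R]_k) : 'M[R]_(1 + k) := block_mx 1%:M 0 0 X.

Lemma blk_cont k : continuous (@blk k).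
Proof.
move=> X A /nbhs_ballP [e /= e0 eA]; apply/nbhs_ballP; exists e => //= Y [_ XY].
apply: eA; split => // i j; rewrite /blk /block_mx !mxE.
case: (fintype.split i) => i'; rewrite !mxE; case: (fintype.split j) => j'; rewrite ?mxE //=;
  first [exact: XY | exact: ballxx].
Qed.

Lemma blk_orth k (X : 'M[R]_k) : orth X -> orth (blk X).
Proof.
rewrite /orth /blk /= => hX.
rewrite tr_block_mx mulmx_block !trmx0 trmx1 !mul0mx !mulmx0 !mul1mx hX.
by rewrite !addr0 !add0r -scalar_mx_block.
Qed.

Lemma blk1 k : blk (1%:M : 'M[R]_k) = 1%:M.
Proof. by rewrite /blk -scalar_mx_block. Qed.

Lemma blk_mul k (X Y : 'M[R]_k) : blk X *m blk Y = blk (X *m Y).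
Proof.
by rewrite /blk mulmx_block !mul0mx !mulmx0 !mul1mx !addr0 !add0r.
Qed.

Lemma Conn_blk k (X : 'M[R]_k) : Conn X -> Conn (blk X).
Proof.
move=> hX.
apply: (@cc_image _ _ orth orth (@blk k) 1%:M 1%:M X) => //.
- by move=> Y _; exact: blk_cont.
- by move=> W hW; exact: blk_orth.
- by rewrite blk1; exact: Conn1.
Qed.

Lemma blk_trmul k (X : 'M[R]_k) : (blk X)^T *m blk X = blk (X^T *m X).
Proof.
rewrite /blk tr_block_mx mulmx_block !trmx0 trmx1 !mul0mx !mulmx0 !mul1mx.
by rewrite !addr0 !add0r.
Qed.

Lemma row0_zero {k} {N : 'M[R]_(1 + k)} : N *m N^T = 1%:M -> N ord0 ord0 = 1 ->
  forall j : 'I_(1 + k), j != ord0 -> N ord0 j = 0.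
Proof.
move=> hN h00.
have := congr1 (fun A : 'M[R]_(1 + k) => A ord0 ord0) hN.
rewrite /= !mxE (bigD1 ord0) //= !mxE h00 mul1r => hs.
have {}hs : \sum_(i < k.+1 | i != ord0) N ord0 i * N^T i ord0 = 0.
  by apply: (addrI 1); rewrite addr0.
move=> i hi.
have hge : forall l : 'I_(1 + k), l != ord0 -> 0 <= N ord0 l * N^T l ord0.
  by move=> l _; rewrite !mxE -expr2 sqr_ge0.
have := psumr_eq0P hge hs hi.
by rewrite !mxE => /eqP; rewrite mulf_eq0 orbb => /eqP.
Qed.

Lemma orth_blk k (M : 'M[R]_(1 + k)) : orth M -> M ord0 ord0 = 1 ->
  M = blk (drsubmx M) /\ orth (drsubmx M).
Proof.
move=> hM h00.
have hM' : M *m M^T = 1%:M by apply: mulmx1C.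
have row0 := row0_zero hM' h00.
have col0 : forall i : 'I_(1 + k), i != ord0 -> M i ord0 = 0.
  move=> i hi.
  have hMt : M^T *m M^T^T = 1%:M by rewrite trmxK.
  have := row0_zero hMt; rewrite mxE => /(_ h00 i hi); rewrite mxE //.
have hl : forall i : 'I_1, lshift k i = ord0 by move=> i; apply/val_inj; rewrite /= ord1.
have hr : forall j : 'I_k, rshift 1 j != ord0 by [].
have hMb : M = blk (drsubmx M).
  rewrite -{1}(submxK M) /blk; congr block_mx; apply/matrixP => i j; rewrite !mxE ?hl.
  - by rewrite h00 !ord1.
  - by rewrite row0.
  - by rewrite col0.
split => //.
move: hM; rewrite /orth /= hMb blk_trmul -blk1 /blk => /eq_block_mx [_ _ _ h].
by rewrite /orth /= block_mxKdr.
Qed.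


Section Refl.
Variable N : nat.
Implicit Types u v x y : 'cV[R]_N.

Definition dot u v : R := (u^T *m v) ord0 ord0.
Definition H u : 'M[R]_N := 1%:M - (2 / dot u u) *: (u *m u^T).

Lemma dot_sum u v : dot u v = \sum_i u i ord0 * v i ord0.
Proof. by rewrite /dot mxE; apply: eq_bigr => i _; rewrite mxE. Qed.

Lemma dotC u v : dot u v = dot v u.
Proof. by rewrite !dot_sum; apply: eq_bigr => i _; rewrite mulrC. Qed.

Lemma dotDl x y v : dot (x + y) v = dot x v + dot y v.
Proof. by rewrite /dot linearD /= mulmxDl mxE. Qed.

Lemma dotZl a x v : dot (a *: x) v = a * dot x v.
Proof. by rewrite /dot linearZ /= -scalemxAl mxE. Qed.

Lemma dotNl x v : dot (- x) v = - dot x v.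
Proof. by rewrite /dot linearN /= mulNmx mxE. Qed.

Lemma dotDr v x y : dot v (x + y) = dot v x + dot v y.
Proof. by rewrite dotC dotDl !(dotC v). Qed.

Lemma dotZr a v x : dot v (a *: x) = a * dot v x.
Proof. by rewrite dotC dotZl (dotC v). Qed.

Lemma dotNr v x : dot v (- x) = - dot v x.
Proof. by rewrite dotC dotNl (dotC v). Qed.

Lemma dot_ge0 u : 0 <= dot u u.
Proof. by rewrite dot_sum sumr_ge0 // => i _; rewrite -expr2 sqr_ge0. Qed.

Lemma dot_delta u (i : 'I_N) : dot u (delta_mx i ord0) = u i ord0.
Proof. by rewrite /dot -colE !mxE. Qed.

Lemma dot_comb a b x y : dot (a *: x + b *: y) (a *: x + b *: y) =
  a * a * dot x x + 2 * a * b * dot x y + b * b * dot y y.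
Proof.
rewrite !(dotDl, dotDr, dotZl, dotZr) (dotC y x); ring.
Qed.

Lemma uut_mul u x : u *m u^T *m x = dot u x *: u.
Proof. by rewrite -mulmxA [u^T *m x]mx11_scalar mul_mx_scalar. Qed.

Lemma H_apply u x : H u *m x = x - (2 / dot u u * dot u x) *: u.
Proof. by rewrite /H mulmxBl mul1mx -scalemxAl uut_mul scalerA. Qed.

Lemma H_sym u : (H u)^T = H u.
Proof. by rewrite /H linearB /= linearZ /= trmx1 trmx_mul trmxK. Qed.

Lemma H_inv u : dot u u != 0 -> H u *m H u = 1%:M.
Proof.
move=> hd.
rewrite {1}/H mulmxBl mul1mx -scalemxAl -mulmxA.
have -> : u^T *m H u = (1 - 2 / dot u u * dot u u) *: u^T.
  rewrite /H mulmxBr mulmx1 -scalemxAr mulmxA [u^T *m u]mx11_scalar mul_scalar_mx.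
  by rewrite scalerA -/(dot u u) scalerBl scale1r.
have -> : 1 - 2 / dot u u * dot u u = -1 by field.
rewrite scaleN1r mulmxN scalerN /H opprK.
by rewrite subrK.
Qed.

Lemma H_orth u : dot u u != 0 -> orth (H u).
Proof. by move=> hd; rewrite /orth /= H_sym H_inv. Qed.

Lemma H_opp u : H (- u) = H u.
Proof. by rewrite /H dotNl dotNr opprK linearN /= mulNmx mulmxN opprK. Qed.

End Refl.
Arguments dot {N}.
Arguments H {N}.
Arguments dot_sum {N}.
Arguments dotC {N}.
Arguments dotDl {N}.
Arguments dotZl {N}.
Arguments dotNl {N}.
Arguments dotDr {N}.
Arguments dotZr {N}.
Arguments dotNr {N}.
Arguments dot_ge0 {N}.
Arguments dot_delta {N}.
Arguments dot_comb {N}.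
Arguments uut_mul {N}.
Arguments H_apply {N}.
Arguments H_sym {N}.
Arguments H_inv {N}.
Arguments H_orth {N}.
Arguments H_opp {N}.


Lemma H_pair_conn N (e w : 'cV[R]_N) : dot e e != 0 -> 0 <= dot e w ->
  dot w w != 0 -> Conn (H e *m H w).
Proof.
move=> hee hew hww.
have pee : 0 < dot e e by rewrite lt_def hee dot_ge0.
have pww : 0 < dot w w by rewrite lt_def hww dot_ge0.
pose u := fun s : R => (1 - s) *: e + s *: w.
have hpos : forall s, 0 <= s <= 1 -> dot (u s) (u s) != 0.
  move=> s /andP [s0 s1]; rewrite /u dot_comb.
  have h1 : 0 <= 2 * (1 - s) * s * dot e w.
    by apply: mulr_ge0 => //; apply: mulr_ge0 => //; apply: mulr_ge0; lra.
  apply/lt0r_neq0.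
  have [->|sp] := eqVneq s 0.
    by rewrite subr0 !mul1r !mul0r mulr0 !addr0 mul0r addr0.
  have sp' : 0 < s by rewrite lt_def sp s0.
  have h2 : 0 < s * s * dot w w by rewrite !mulr_gt0.
  have h3 : 0 <= (1 - s) * (1 - s) * dot e e.
    by rewrite !mulr_ge0 // ?subr_ge0 // ltW.
  lra.
pose g := fun s : R => H e *m H (u s).
have gcont : forall s, 0 <= s <= 1 -> {for s, continuous g}.
  move=> s hs; apply: mx_cont_entries.
  have c1 : {for s, continuous (fun r : R => 1 - r)}.
    apply: cont_add; [exact: cont_cst | apply: cont_opp; exact: cont_id].
  have ECu : EC u s.
    apply: EC_add; apply: EC_scale; try exact: EC_cst; [exact: c1 | exact: cont_id].
  have hd : {for s, continuous (fun r => dot (u r) (u r))}.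
    by have := EC_mul (EC_tr ECu) ECu ord0 ord0; rewrite /dot.
  have hc : {for s, continuous (fun r => 2 / dot (u r) (u r))}.
    apply: (@cont_mul _ (fun _ => 2) (fun r => (dot (u r) (u r))^-1)).
      exact: cont_cst.
    exact: (@cont_inv _ (fun r => dot (u r) (u r)) s (hpos s hs) hd).
  apply: EC_mul; first exact: EC_cst.
  apply: EC_add; first exact: EC_cst.
  apply: EC_opp; apply: EC_scale => //.
  apply: EC_mul => //; exact: EC_tr.
have I01 : connected_component `[(0:R), 1]%classic 0 = `[(0:R), 1]%classic.
  apply: connected_component_id; last exact: segment_connected.
  by rewrite /= in_itv /= lexx ler01.
have -> : H e *m H w = g 1 by rewrite /g /u subrr scale0r add0r scale1r.
apply: (@cc_image _ _ `[(0:R), 1]%classic orth g 0 1%:M 1).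
- move=> s; rewrite inE I01 /= in_itv /= => hs; exact: gcont.
- move=> s; rewrite /= in_itv /= => hs; apply: orth_mul; apply: H_orth => //.
  exact: hpos.
- rewrite /g /u subr0 scale1r scale0r addr0 H_inv //; exact: Conn1.
- by rewrite I01 /= in_itv /= lexx ler01.
Qed.


Lemma step_Q j (O : 'M[R]_(j.+2)) : orth O ->
  exists Q, Conn Q /\ (Q *m O) ord0 ord0 = 1.
Proof.
move=> hO.
have [h1|hn1] := eqVneq (O ord0 ord0) 1.
  by exists 1%:M; split; [exact: Conn1 | rewrite mul1mx].
pose v : 'cV[R]_(j.+2) := col ord0 O.
pose e0 : 'cV[R]_(j.+2) := delta_mx ord0 ord0.
pose e1 : 'cV[R]_(j.+2) := delta_mx (lift ord0 ord0) ord0.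
pose w := v - e0.
have dvv : dot v v = 1.
  have := congr1 (fun A : 'M[R]_(j.+2) => A ord0 ord0) hO.
  rewrite /= !mxE dot_sum => h; apply: (etrans _ h); apply: eq_bigr => i _; rewrite !mxE //.
have dve0 : dot v e0 = O ord0 ord0 by rewrite dot_delta mxE.
have de0e0 : dot e0 e0 = 1 by rewrite dot_delta mxE.
have de1e1 : dot e1 e1 = 1 by rewrite dot_delta mxE !eqxx.
have de1e0 : dot e1 e0 = 0 by rewrite dot_delta mxE.
have dwv : dot w v = 1 - O ord0 ord0 by rewrite /w dotDl dotNl dvv (dotC e0) dve0.
have dww : dot w w = 2 - 2 * O ord0 ord0.
  rewrite /w !(dotDl, dotDr, dotNl, dotNr) dvv de0e0 (dotC e0) dve0 opprK; ring.
have hne : 1 - O ord0 ord0 != 0 by rewrite subr_eq0 eq_sym.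
have dww0 : dot w w != 0.
  rewrite dww (_ : 2 - 2 * O ord0 ord0 = 2 * (1 - O ord0 ord0)); last by ring.
  by rewrite mulf_neq0.
have Hwv : H w *m v = e0.
  rewrite H_apply dwv dww.
  have -> : 2 / (2 - 2 * O ord0 ord0) * (1 - O ord0 ord0) = 1.
    rewrite (_ : 2 - 2 * O ord0 ord0 = 2 * (1 - O ord0 ord0)); last by ring.
    field; exact: hne.
  by rewrite scale1r /w opprB addrC subrK.
have He1 : H e1 *m e0 = e0 by rewrite H_apply de1e0 mulr0 scale0r subr0.
pose w' := if 0 <= dot e1 w then w else - w.
have Hw' : H w' = H w by rewrite /w'; case: ifP => _ //; rewrite H_opp.
have dw'w' : dot w' w' = dot w w.
  by rewrite /w'; case: ifP => _ //; rewrite dotNl dotNr opprK.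
have de1w' : 0 <= dot e1 w'.
  rewrite /w'; case: ifP => // /negbT; rewrite dotNr -real_ltNge ?real0 ?num_real //.
  by move=> /ltW; rewrite oppr_ge0.
exists (H e1 *m H w'); split.
  apply: (@H_pair_conn _ e1 w') => //; first by rewrite de1e1 oner_eq0.
  by rewrite dw'w'.
have -> : (H e1 *m H w' *m O) ord0 ord0 = (H e1 *m H w' *m v) ord0 ord0.
  by rewrite /v colE mulmxA -colE !mxE.
by rewrite Hw' -mulmxA Hwv He1 mxE.
Qed.


Lemma SO_Conn k (O : 'M[R]_k) : orth O -> \det O = 1 -> Conn O.
Proof.
elim: k O => [|k IH] O hO hd.
  have -> : O = 1%:M by apply/matrixP => [] [].
  exact: Conn1.
case: k IH O hO hd => [|j] IH O hO hd.
  have -> : O = 1%:M.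
    apply/matrixP => a b; rewrite !ord1 mxE /=; rewrite det_mx11 in hd; exact: hd.
  exact: Conn1.
have [Q [hQ hQO]] := @step_Q j O hO.
pose M : 'M[R]_(1 + j.+1) := Q *m O.
have hM : orth M by apply: orth_mul => //; exact: Conn_orth.
have [hMb hM'] := @orth_blk (j.+1) M hM hQO.
have hdM : \det (drsubmx M) = 1.
  have : \det M = 1 by rewrite det_mulmx (Conn_det _ hQ) hd mulr1.
  by rewrite hMb /blk det_ublock det1 mul1r block_mxKdr.
have hCM : Conn M by rewrite hMb; apply: Conn_blk; exact: IH.
have -> : O = Q^T *m M.
  by rewrite /M mulmxA (Conn_orth _ hQ) mul1mx.
apply: Conn_mul => //; exact: Conn_tr.
Qed.


Lemma eta_blk n : (@Defs.eta R n : 'M[R]_(1 + n)) = block_mx (-1)%:M 0 0 1%:M.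
Proof.
apply/matrixP => i j; rewrite /Defs.eta !mxE.
case: splitP => i' hi; rewrite !mxE; case: splitP => j' hj; rewrite !mxE;
  rewrite -[i == j]/(nat_of_ord i == nat_of_ord j) -[i == ord0]/(nat_of_ord i == 0%N) hi hj.
- by rewrite !ord1.
- by rewrite !ord1.
- by rewrite !ord1.
- by rewrite /= eqSS -[(i' : nat) == j']/(i' == j'); case: (i' == j').
Qed.


Lemma p_rest_col n (m : R) : (@Defs.p_rest R n m : 'cV[R]_(1 + n)) = col_mx (m%:M : 'M[R]_1) 0.
Proof.
apply/matrixP => i j; rewrite /Defs.p_rest !mxE.
case: splitP => i' hi; rewrite !mxE -[i == ord0]/(nat_of_ord i == 0%N) hi.
- by rewrite !ord1.
- by [].
Qed.

Lemma blk_p n (m : R) (W : 'M[R]_n) :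
  (blk W : 'M[R]_(1 + n)) *m (@Defs.p_rest R n m : 'cV[R]_(1 + n)) = Defs.p_rest n m.
Proof.
by rewrite p_rest_col /blk mul_block_col !mul0mx mulmx0 mul1mx addr0 add0r.
Qed.

Lemma lorentz_blk n (W : 'M[R]_n) : orth W -> lorentz n (blk W).
Proof.
rewrite /orth /lorentz /= => hW.
have E : (blk W)^T *m (block_mx (-1)%:M 0 0 1%:M : 'M[R]_(1 + n)) *m blk W
         = block_mx (-1)%:M 0 0 1%:M.
  rewrite /blk tr_block_mx !trmx0 trmx1 !mulmx_block.
  rewrite !mul0mx !mulmx0 !mul1mx !mulmx1 !addr0 !add0r.
  by congr block_mx; [exact: mul0mx | exact: hW].
by move: E; rewrite -eta_blk.
Qed.

Lemma lorentz1 n : lorentz n (1%:M : 'M[R]_(n.+1)).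
Proof. by rewrite /lorentz /= trmx1 mul1mx mulmx1. Qed.

Lemma spatial_po n (O : 'M[R]_n) : orth O -> \det O = 1 ->
  lorentz_po n (spatial_rot O).
Proof.
move=> hO hd; have hC := @SO_Conn n O hO hd.
rewrite /lorentz_po.
apply: (@cc_image _ _ orth (lorentz n) (@blk n) 1%:M 1%:M O) => //.
- by move=> Y _; exact: blk_cont.
- by move=> W hW; exact: lorentz_blk.
- by rewrite blk1; apply: connected_component_refl; exact: lorentz1.
Qed.

End Cont.
Theorem lemma1 (R : realType) (n d : nat) (m : R) (hm : 0 < m)
  (St : Type) (Ss : set St) (Es : set (St -> R)) (Ts : set (St -> St))
  (Rst : poin R n -> St -> St) (Ref : poin R n -> (St -> R) -> (St -> R))
  (S E : set 'cV[R]_(d.+1)) (T : set 'M[R]_(d.+1))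
  (delta : 'cV[R]_(n.+1) -> R)
  (hdelta0 : delta 0 <> 0) (hdelta : forall v : 'cV[R]_(n.+1), v <> 0 -> delta v = 0)
  (Zc : 'cV[R]_(n.+1) -> 'cV[R]_(d.+1) -> St)
  (Ec : 'cV[R]_(n.+1) -> 'cV[R]_(d.+1) -> (St -> R))
  (Rstp Refp : 'cV[R]_(n.+1) -> poin R n -> 'cV[R]_(d.+1) -> 'cV[R]_(d.+1))
  (hTs : forall t Z, Ts t -> Ss Z -> Ss (t Z))
  (hGPT : fin_GPT d S E T)
  (hPoin : nontriv_poincare_invariant n Ss Es Rst Ref)
  (hCM : classical_momentum n d m Ss Es Rst Ref S E delta Zc Ec Rstp Refp) :
  forall O1 O2 : 'M[R]_n, SO n O1 -> SO n O2 ->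
  forall z, S z ->
    Rstp (p_rest n m) (P 0 (spatial_rot O2)) (Rstp (p_rest n m) (P 0 (spatial_rot O1)) z)
    = Rstp (p_rest n m) (P 0 (spatial_rot O2 *m spatial_rot O1)) z.
Proof.
move=> O1 O2 [hO1 hd1] [hO2 hd2] z hz.
have Lp : forall O : 'M[R]_n, O^T *m O = 1%:M -> \det O = 1 ->
    Poin n (P 0 (spatial_rot O)).
  by move=> O hO hd; rewrite /Poin /P /=; exact: spatial_po.
have P1 := Lp O1 hO1 hd1.
have P2 := Lp O2 hO2 hd2.
have E12 : spatial_rot O2 *m spatial_rot O1 = spatial_rot (O2 *m O1).
  exact: blk_mul.
have P12 : Poin n (P 0 (spatial_rot O2 *m spatial_rot O1)).
  rewrite E12; apply: Lp; last by rewrite det_mulmx hd1 hd2 mulr1.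
  exact: (@orth_mul R n O2 O1).
have hRp : forall O : 'M[R]_n, spatial_rot O *m p_rest n m = p_rest n m.
  move=> O; exact: blk_p.
have hms : mass_shell n m (p_rest n m).
  exists 1%:M; split; last by rewrite mul1mx.
  apply: connected_component_refl; exact: lorentz1.
case: hCM => hZs hEs hEZ hRst hRef.
case: hPoin => [[_ _ hcomp] _ _ _ _].
case: hGPT => _ _ _ hsep _.
set p := p_rest n m.
have [hz1 e1] := hRst p (P 0 (spatial_rot O1)) z hms P1 hz.
set z1 := Rstp p (P 0 (spatial_rot O1)) z in hz1 e1 *.
have [hz2 e2] := hRst p (P 0 (spatial_rot O2)) z1 hms P2 hz1.
have [hz3 e3] := hRst p (P 0 (spatial_rot O2 *m spatial_rot O1)) z hms P12 hz.
have hc := hcomp (P 0 (spatial_rot O2)) (P 0 (spatial_rot O1)) (Zc p z) P1 P2 (hZs p z hms hz).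
have hpc : Defs.pcomp (P 0 (spatial_rot O2)) (P 0 (spatial_rot O1)) =
           P 0 (spatial_rot O2 *m spatial_rot O1).
  by rewrite /Defs.pcomp /P /= mulmx0 addr0.
rewrite hpc e3 e1 /= hRp e2 /= hRp -mulmxA !hRp -/p in hc.
apply: hsep => // e he.
have h2 := hEZ p p _ e hms hms hz2 he.
have h3 := hEZ p p _ e hms hms hz3 he.
rewrite subrr in h2 h3.
have hd0 : delta 0 != 0 by apply/eqP.
apply: (mulfI hd0).
by rewrite -h2 -h3 hc.
Qed.
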